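(* Let $\Gamma$ be a Neumaier graph with vertex set $V$ and parameters $(n,k,\lambda;a,c)$. Let $C\subset V$ be a regular clique with nexus $a$, let $e\in C$ be an arbitrary vertex, and let $S$ be the set of neighbours of $e$ in $\Gamma$. Then: (i) The induced subgraph on $S\setminus C$ is regular. Moreover, if the number of neighbours in $S\setminus C$ of a vertex $x\in V\setminus(S\cup\{e\})$ is independent of the choice of $x$, then $\{\{e\},\,C\setminus\{e\},\,S\setminus C,\,V\setminus(S\cup\{e\})\}$ is an equitable partition of $\Gamma$. (ii) If $\Gamma$ is strongly regular, then the number of neighbours in $S\setminus C$ of a vertex $x\in V\setminus(S\cup\{e\})$ is independent of the choice of $x$. (iii) If $\Gamma$ is vertex-transitive, then $\Gamma$ has diameter $2$. Moreover, in this case $\Gamma$ is strongly regular if and only if the number of neighbours in $S\setminus C$ of a vertex $x\in V\setminus(S\cup\{e\})$ is independent of the choice of $x$.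
   Context: All graphs are finite, simple, undirected and connected. A graph is edge-regular with parameters $(n,k,\lambda)$ if it has $n$ vertices, is $k$-regular, and any two adjacent vertices have exactly $\lambda$ common neighbours. A clique $C$ is a regular clique with nexus $a$ if every vertex not in $C$ has exactly $a$ neighbours in $C$. A Neumaier graph is a non-complete edge-regular graph containing a regular clique; in a Neumaier graph all regular cliques have the same size $c$ and nexus $a$, and the graph has parameters $(n,k,\lambda;a,c)$ if it is edge-regular with parameters $(n,k,\lambda)$ and contains a regular clique of size $c$ with nexus $a$. A strongly regular graph with parameters $(n,k,\lambda,\mu)$ is a non-complete connected $k$-regular graph on $n$ vertices in which two adjacent vertices have exactly $\lambda$ common neighbours and two non-adjacent vertices have exactly $\mu$ common neighbours. A partition $\{V_1,\dots,V_m\}$ of the vertex set is equitable if for all $i,j$ the number of neighbours in $V_j$ of a vertex $x\in V_i$ depends only on $i,j$. *)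

(* Defs.v *)
From mathcomp Require Import all_boot fingroup perm.
Set Implicit Arguments. Unset Strict Implicit. Unset Printing Implicit Defensive.

Section Graphs.
Variables (T : finType) (g : rel T).

Definition simple_connected_graph : Prop :=
  symmetric g /\ irreflexive g /\ forall x y : T, connect g x y.

Definition nbhd (x : T) : {set T} := [set y | g x y].

Definition k_regular (k : nat) : Prop := forall x : T, #|nbhd x| = k.

Definition complete_graph : Prop := forall x y : T, x != y -> g x y.

Definition edge_regular (n k l : nat) : Prop :=
  #|T| = n /\ k_regular k /\
  forall x y : T, g x y -> #|nbhd x :&: nbhd y| = l.

Definition is_clique (C : {set T}) : Prop :=
  forall x y, x \in C -> y \in C -> x != y -> g x y.

Definition regular_clique (C : {set T}) (a : nat) : Prop :=
  C != set0 /\ is_clique C /\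
  forall x, x \notin C -> #|nbhd x :&: C| = a.

Definition neumaier_params (n k l a c : nat) : Prop :=
  simple_connected_graph /\ edge_regular n k l /\ ~ complete_graph /\
  exists C : {set T}, regular_clique C a /\ #|C| = c.

Definition strongly_regular (n k l mu : nat) : Prop :=
  simple_connected_graph /\ ~ complete_graph /\ #|T| = n /\ k_regular k /\
  (forall x y, g x y -> #|nbhd x :&: nbhd y| = l) /\
  (forall x y, x != y -> ~~ g x y -> #|nbhd x :&: nbhd y| = mu).

Definition is_strongly_regular : Prop :=
  exists n k l mu, strongly_regular n k l mu.

Definition induced_regular (A : {set T}) : Prop :=
  exists r, forall x, x \in A -> #|nbhd x :&: A| = r.

(* P is a partition of the vertex set (every vertex in exactly one block;
   empty blocks are tolerated) which is equitable *)
Definition equitable_partition (P : seq {set T}) : Prop :=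
  (forall x : T, count (fun A : {set T} => x \in A) P = 1) /\
  forall A B, A \in P -> B \in P -> forall x y, x \in A -> y \in A ->
    #|nbhd x :&: B| = #|nbhd y :&: B|.

Definition automorphism (f : {perm T}) : Prop :=
  forall u v, g (f u) (f v) = g u v.

Definition vertex_transitive : Prop :=
  forall x y : T, exists f : {perm T}, automorphism f /\ f x = y.

(* diameter exactly 2 (for a connected graph): some pair at distance 2,
   every pair at distance at most 2 *)
Definition diameter2 : Prop :=
  (exists x y : T, x != y /\ ~~ g x y) /\
  forall x y : T, x != y -> ~~ g x y -> exists z, g x z && g z y.

End Graphs.

(* Main.v *)
Require Import Defs.
From mathcomp Require Import all_boot fingroup perm.

Lemma aut_card (T : finType) (g : rel T) (h : {perm T}) x y :
  automorphism g h ->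
  #|nbhd g (h x) :&: nbhd g (h y)| = #|nbhd g x :&: nbhd g y|.
Proof.
move=> Ha; rewrite -(card_preimset _ (@perm_inj _ h)); apply: eq_card => z.
by rewrite /nbhd !inE !Ha.
Qed.

Theorem theorem3p3 (T : finType) (g : rel T) (n k l a c : nat)
  (C : {set T}) (e : T) :
  neumaier_params g n k l a c ->
  regular_clique g C a ->
  e \in C ->
  let S := nbhd g e in
  let R := ~: (S :|: [set e]) in
  let constcount := exists m, forall x, x \in R -> #|nbhd g x :&: (S :\: C)| = m in
  (* (i) *)
  (induced_regular g (S :\: C) /\
   (constcount ->
      equitable_partition g [:: [set e]; C :\ e; S :\: C; R])) /\
  (* (ii) *)
  (is_strongly_regular g -> constcount) /\
  (* (iii) *)
  (vertex_transitive g ->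
     diameter2 g /\ (is_strongly_regular g <-> constcount)).
Proof.
move=> [[gsym [girr gconn]] [[nT [kreg lreg]] [ncomp _]]] [C0 [Ccl Cnex]] eC S R cc.
have memN : forall x y, (y \in nbhd g x) = g x y by move=> x y; rewrite /nbhd inE.
have SC : forall z, (g e z) && (z \in C) = (z != e) && (z \in C).
  move=> z; have [->|ze] := eqVneq z e; first by rewrite girr.
  case zC: (z \in C); last by rewrite !andbF.
  by rewrite Ccl // eq_sym.
have memR : forall x, (x \in R) = (x != e) && ~~ g e x.
  by move=> x; rewrite /R !inE negb_or andbC.
have L1 : forall x, #|nbhd g x :&: S| =
    #|nbhd g x :&: (S :\: C)| + #|(nbhd g x :&: C) :\ e|.
  move=> x; rewrite -(cardsID C (nbhd g x :&: S)) addnC; congr (_ + _).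
    by apply: eq_card => z; rewrite !inE andbCA.
  by apply: eq_card => z; rewrite !inE -andbA SC andbCA.
have q2R : forall x, x \in R -> #|(nbhd g x :&: C) :\ e| = a.
  move=> x; rewrite memR => /andP [xe nex].
  have xC : x \notin C.
    by apply: contra nex => xC; apply: Ccl; rewrite // eq_sym.
  by rewrite -(Cnex x xC) [RHS](cardsD1 e) !inE gsym (negbTE nex).
have q2S : forall x, x \in S :\: C -> #|(nbhd g x :&: C) :\ e| = a.-1.
  move=> x; rewrite !inE => /andP [xC ex].
  by rewrite -(Cnex x xC) [in RHS](cardsD1 e) !inE gsym ex eC.
have q2C : forall x, x \in C :\ e -> #|(nbhd g x :&: C) :\ e| = #|C|.-2.
  move=> x; rewrite !inE => /andP [xe xC].
  rewrite (cardsD1 x C) xC (cardsD1 e (C :\ x)) !inE eq_sym xe eC /=.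
  apply: eq_card => z; rewrite !inE.
  have [->|zx] := eqVneq z x; first by rewrite girr.
  case zC: (z \in C); last by rewrite !andbF.
  by rewrite Ccl // eq_sym.
have q3adj : forall x, g e x -> #|nbhd g x :&: (S :\: C)| = l - #|(nbhd g x :&: C) :\ e|.
  move=> x ex; rewrite -(lreg x e); last by rewrite gsym.
  by rewrite -/S L1 addnK.
have c1 : forall x, #|nbhd g x :&: [set e]| = g x e.
  move=> x; rewrite (cardsD1 e) !inE eqxx andbT.
  have -> : nbhd g x :&: [set e] :\ e = set0.
    by apply/setP => z; rewrite !inE; case: (z == e); rewrite ?andbF.
  by rewrite cards0 addn0.
have cC : forall x, #|nbhd g x :&: (C :\ e)| = #|(nbhd g x :&: C) :\ e|.
  by move=> x; apply: eq_card => z; rewrite !inE andbCA.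
have cR : forall x, #|nbhd g x :&: R| = k - (#|nbhd g x :&: S| + g x e).
  move=> x.
  have HH : #|nbhd g x :&: (S :|: [set e])| = #|nbhd g x :&: S| + g x e.
    rewrite (cardsD1 e) addnC !inE eqxx orbT andbT; congr (_ + _).
    apply: eq_card => z; rewrite !inE.
    by have [->|ze] := eqVneq z e; rewrite ?girr ?andbF ?orbF.
  by rewrite /R -setDE -(kreg x) -(cardsID (S :|: [set e]) (nbhd g x)) -HH addKn.
have sig : forall x y, g x e = g y e ->
    #|(nbhd g x :&: C) :\ e| = #|(nbhd g y :&: C) :\ e| ->
    #|nbhd g x :&: (S :\: C)| = #|nbhd g y :&: (S :\: C)| ->
    forall B, B \in [:: [set e]; C :\ e; S :\: C; R] ->
    #|nbhd g x :&: B| = #|nbhd g y :&: B|.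
  move=> x y H1 H2 H3 B; rewrite !inE => /or4P [] /eqP ->.
  - by rewrite !c1 H1.
  - by rewrite !cC H2.
  - by [].
  - by rewrite !cR !L1 H1 H2 H3.
have partI : induced_regular g (S :\: C).
  exists (l - a.-1) => x xS.
  have ex : g e x by move: xS; rewrite !inE => /andP [].
  by rewrite q3adj // q2S.
have partII : is_strongly_regular g -> cc.
  move=> [n' [k' [l' [mu [_ [_ [_ [_ [_ Hmu]]]]]]]]].
  exists (mu - a) => x xR.
  have := xR; rewrite memR => /andP [xe nex].
  rewrite -(Hmu x e xe); last by rewrite gsym.
  by rewrite -/S L1 (q2R x xR) addnK.
split.
  split => // [[m Hm]]; split.
    move=> x; rewrite /= !inE.
    have [->|xe] := eqVneq x e; first by rewrite girr !andbF.
    rewrite /=; case xC: (x \in C).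
      by rewrite Ccl // eq_sym.
    by case: (g e x).
  move=> A B AP BP x y; move: AP; rewrite !inE => /or4P [] /eqP ->.
  - by rewrite !inE => /eqP -> /eqP ->.
  - move=> xA yA; apply: sig => //.
    + move: xA yA; rewrite !inE => /andP [xe xC] /andP [ye yC].
      by rewrite !Ccl // eq_sym.
    + by rewrite !q2C.
    + have ex : g e x by move: xA; rewrite !inE => /andP [xe xC]; rewrite Ccl // eq_sym.
      have ey : g e y by move: yA; rewrite !inE => /andP [ye yC]; rewrite Ccl // eq_sym.
      by rewrite !q3adj // !q2C.
  - move=> xA yA.
    have ex : g e x by move: xA; rewrite !inE => /andP [].
    have ey : g e y by move: yA; rewrite !inE => /andP [].
    apply: sig => //.
    + by rewrite gsym ex gsym ey.
    + by rewrite !q2S.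
    + by rewrite !q3adj // !q2S.
  - move=> xA yA; apply: sig => //.
    + move: xA yA; rewrite !memR => /andP [_ ex] /andP [_ ey].
      by rewrite gsym (negbTE ex) gsym (negbTE ey).
    + by rewrite !q2R.
    + by rewrite !Hm.
split => // VT.
have a_pos : 0 < a.
  rewrite lt0n; apply/negP => /eqP a0; apply: ncomp => x y xy.
  have H : forall u v, g u v -> u \in C -> v \in C.
    move=> u v guv uC; apply/negPn/negP => vC.
    have := Cnex v vC; rewrite a0 => /eqP; rewrite cards_eq0 => /eqP/setP/(_ u).
    by rewrite !inE gsym guv uC.
  have clC : closed g C.
    move=> u v guv; apply/idP/idP; first exact: H.
    by apply: H; rewrite gsym.
  have allC : forall z, z \in C by move=> z; rewrite -(closed_connect clC (gconn e z)).
  by apply: Ccl.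
split.
  split.
    case: (pickP [pred p : T * T | (p.1 != p.2) && ~~ g p.1 p.2]) => [[x y] /andP [xy nxy] | H].
      by exists x, y.
    exfalso; apply: ncomp => x y xy; have := H (x, y); rewrite /= xy /= => /negbFE.
    done.
  move=> x y xy nxy.
  have [h [ha hx]] := VT x e.
  have y'e : h y != e by rewrite -hx (inj_eq (@perm_inj _ h)) eq_sym.
  have ny' : ~~ g e (h y) by rewrite -hx ha.
  have y'C : h y \notin C.
    by apply: contra ny' => yC; apply: Ccl; rewrite // eq_sym.
  have : 0 < #|nbhd g (h y) :&: C| by rewrite Cnex.
  rewrite card_gt0 => /set0Pn [z]; rewrite !inE => /andP [yz zC].
  have ze : z != e by apply/eqP => ze; move: ny'; rewrite -ze gsym yz.
  have ez : g e z by apply: Ccl; rewrite // eq_sym.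
  exists ((h^-1)%g z).
  by rewrite -ha hx permKV ez /= -ha permKV gsym yz.
split => // -[m Hm].
exists n, k, l, (m + a).
split; first by split.
split => //; split => //; split => //; split => //.
move=> x y xy nxy.
have [h [ha hx]] := VT x e.
have y'e : h y != e by rewrite -hx (inj_eq (@perm_inj _ h)) eq_sym.
have ny' : ~~ g e (h y) by rewrite -hx ha.
have yR : h y \in R by rewrite memR y'e.
rewrite -(@aut_card _ g h x y ha) hx setIC -/S L1 Hm ?q2R //.
Qed.
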